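(* Consider the subsidy game described in the context, and suppose that in period 2 both developers choose openness $\bar\eta$ and the incumbent charges $w_2=w_L$. Define $$\bar{\eta}_{Hg} = \frac{k(\theta+s-w_H)}{2c-k(\theta+s-w_H)},\qquad \bar{\eta}_{Lg} = \frac{k(\theta+s-w_L)}{2c-k(\theta+s-w_L)}.$$ (a) $\bar\eta_{Hg}\le\bar\eta_{Lg}$, and: if the incumbent charges $w_1=w_H$ in period 1, the deployer selects the incumbent in period 2 iff $\eta_1\le\bar\eta_{Hg}$; if it charges $w_1=w_L$, the deployer selects the incumbent in period 2 iff $\eta_1\le\bar\eta_{Lg}$. (b) Conditional on the period-2 outcome, the incumbent's total profit is increasing in $\eta_1$: with $\alpha_1=\frac{(1+\eta_1)(\theta-w_1+s)}{2c}$ and $\alpha_2=\frac{(1+k\alpha_1)(1+\bar\eta)(\theta-w_L+s)}{2c}$, both $w_1\alpha_1+w_L\alpha_2$ and $w_1\alpha_1$ are monotonically increasing in $\eta_1\in[0,\bar\eta]$.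
   Context: Parameters: $\theta>0$, $c>0$, license fees $0\le w_L\le w_H\le\theta/2$, openness cap $\bar\eta>0$, data flywheel parameter $k\ge0$, subsidy $0\le s\le w_L$. Two periods $t\in\{1,2\}$; users choose engagement $\alpha_t$ maximizing $Q_t\alpha_t-\alpha_t^2/2$, so $\alpha_t=Q_t$, where $Q_t$ is the deployer's fine-tuning effort. Period 1: an incumbent developer chooses $w_1\in\{w_H,w_L\}$ and openness $\eta_1\in[0,\bar\eta]$; the deployer chooses $Q_1$ to maximize $(\theta-w_1+s)\alpha_1-\frac{cQ_1^2}{1+\eta_1}$. Period 2: the incumbent chooses $w_2\in\{w_H,w_L\}$ and $\eta_2\in[0,\bar\eta]$; an entrant charges $w_L$ and chooses $\tilde\eta_2\in[0,\bar\eta]$. For each developer the deployer chooses effort optimally: with the incumbent its period-2 profit is $(\theta-w_2+s)Q_2-\frac{cQ_2^2}{(1+k\alpha_1)(1+\eta_2)}$, with the entrant $(\theta-w_L+s)Q_2-\frac{cQ_2^2}{(1+\eta_1)(1+\tilde\eta_2)}$; it selects the incumbent iff the incumbent's optimized profit is at least the entrant's. Developers receive the full fee per unit: incumbent's payoff $w_1\alpha_1+w_2\alpha_2$ if selected in period 2, else $w_1\alpha_1$; entrant's payoff $w_L\alpha_2$ if selected, else $0$. Standing assumption: $k\le\min\Big\{\frac{2c\bar\eta}{(1+\bar\eta)(\theta-w_L+s)},\frac{2c(2\theta+2s-w_H-w_L)(w_H-w_L)}{(\theta-w_H+s)^2(\theta-w_L+s)}\Big\}$. *)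

(* Defs.v *)
From HB Require Import structures.
From mathcomp Require Import all_boot all_order all_algebra.
Set Implicit Arguments. Unset Strict Implicit. Unset Printing Implicit Defensive.
Import Order.TTheory GRing.Theory Num.Theory.
Local Open Scope ring_scope.

Section Model.
Variable R : realFieldType.

(* Users' engagement equals the deployer's fine-tuning effort: alpha_t = Q_t. *)

Definition deployer1 (theta c s w1 eta1 Q : R) : R :=
  (theta - w1 + s) * Q - c * Q ^+ 2 / (1 + eta1).

(* Period-2 deployer profit when working with the incumbent
   (alpha1 = period-1 engagement, k = data flywheel). *)
Definition deployer2_inc (theta c s k alpha1 w2 eta2 Q : R) : R :=
  (theta - w2 + s) * Q - c * Q ^+ 2 / ((1 + k * alpha1) * (1 + eta2)).

Definition deployer2_ent (theta c s wL eta1 eta2t Q : R) : R :=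
  (theta - wL + s) * Q - c * Q ^+ 2 / ((1 + eta1) * (1 + eta2t)).

Definition is_maximizer (f : R -> R) (Q : R) : Prop := forall Q', f Q' <= f Q.

(* The deployer selects the incumbent iff its optimized profit with the
   incumbent is at least its optimized profit with the entrant. *)
Definition selects_incumbent (theta c s k wL alpha1 eta1 w2 eta2 eta2t : R) : Prop :=
  exists Q, forall Q',
    deployer2_ent theta c s wL eta1 eta2t Q' <= deployer2_inc theta c s k alpha1 w2 eta2 Q.

Definition eta_g (theta c s k w : R) : R :=
  k * (theta + s - w) / (2 * c - k * (theta + s - w)).

Definition alpha1_of (theta c s w1 eta1 : R) : R :=
  (1 + eta1) * (theta - w1 + s) / (2 * c).
Definition alpha2_of (theta c s k wL etabar w1 eta1 : R) : R :=
  (1 + k * alpha1_of theta c s w1 eta1) * (1 + etabar) * (theta - wL + s) / (2 * c).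

End Model.

(* Main.v *)
Require Import Defs.
From HB Require Import structures.
From mathcomp Require Import all_boot all_order all_algebra.
From mathcomp Require Import ring lra.
Import Order.TTheory GRing.Theory Num.Theory.
Local Open Scope ring_scope.

Section S. Variable R : realFieldType.
Lemma quad_id (b c D Q : R) : 0 < c -> 0 < D ->
  D * b^+2 / (4*c) - (b*Q - c*Q^+2/D) = c/D * (Q - D*b/(2*c))^+2.
Proof. move=> c0 D0. have ? : c != 0 by apply/lt0r_neq0. have ? : D != 0 by apply/lt0r_neq0.
by field; apply/andP. Qed.

Lemma quad_le (b c D Q : R) : 0 < c -> 0 < D ->
  b*Q - c*Q^+2/D <= D * b^+2 / (4*c).
Proof. move=> c0 D0; rewrite -subr_ge0 quad_id //.
by apply: mulr_ge0; [apply: divr_ge0; apply: ltW | apply: sqr_ge0]. Qed.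

Lemma quad_at (b c D : R) : 0 < c -> 0 < D ->
  b*(D*b/(2*c)) - c*(D*b/(2*c))^+2/D = D * b^+2 / (4*c).
Proof. move=> c0 D0. have ? : c != 0 by apply/lt0r_neq0. have ? : D != 0 by apply/lt0r_neq0.
by field; apply/andP. Qed.

Lemma quad_uniq (b c D Q : R) : 0 < c -> 0 < D ->
  D * b^+2 / (4*c) <= b*Q - c*Q^+2/D -> Q = D*b/(2*c).
Proof. move=> c0 D0 h.
have p : 0 < c / D by apply: divr_gt0.
have h1 : c / D * (Q - D*b/(2*c))^+2 <= 0 by rewrite -quad_id // subr_le0.
rewrite pmulr_rle0 // in h1.
have : (Q - D*b/(2*c))^+2 == 0 by rewrite eq_le h1 sqr_ge0.
by rewrite sqrf_eq0 subr_eq0 => /eqP.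
Qed.

Lemma part_a (theta c s k wL w etabar eta1 Q1 : R) :
  0 < c -> 0 <= eta1 -> 0 < etabar -> 0 < theta - wL + s -> 0 < theta - w + s ->
  0 <= k -> k * (theta - w + s) < 2 * c ->
  is_maximizer (deployer1 theta c s w eta1) Q1 ->
  (selects_incumbent theta c s k wL Q1 eta1 wL etabar etabar
        <-> eta1 <= eta_g theta c s k w).
Proof.
move=> c0 e0 eb0 A0 X0 k0 kX hmax.
have D1 : 0 < 1 + eta1 by lra.
have hQ1 : Q1 = (1 + eta1) * (theta - w + s) / (2 * c).
  apply: quad_uniq => //; have := hmax ((1 + eta1) * (theta - w + s) / (2 * c)).
  by rewrite /deployer1 quad_at.
have Q10 : 0 <= Q1 by rewrite hQ1; apply: divr_ge0; [apply: mulr_ge0; lra| lra].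
have Di : 0 < (1 + k * Q1) * (1 + etabar).
  by apply: mulr_gt0; [have := mulr_ge0 k0 Q10; lra | lra].
have De : 0 < (1 + eta1) * (1 + etabar) by apply: mulr_gt0; lra.
have step : selects_incumbent theta c s k wL Q1 eta1 wL etabar etabar <->
   (1 + eta1) * (1 + etabar) * (theta - wL + s)^+2 / (4*c) <=
   (1 + k * Q1) * (1 + etabar) * (theta - wL + s)^+2 / (4*c).
  split.
  - case=> Q hQ.
    have := hQ ((1 + eta1) * (1 + etabar) * (theta - wL + s) / (2 * c)).
    rewrite /deployer2_ent /deployer2_inc quad_at // => h.
    apply: (le_trans h); exact: quad_le.
  - move=> h; exists ((1 + k * Q1) * (1 + etabar) * (theta - wL + s) / (2 * c)) => Q'.
    rewrite /deployer2_ent /deployer2_inc quad_at //.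
    apply: (le_trans _ h); exact: quad_le.
rewrite step.
have K0 : 0 < (1 + etabar) * (theta - wL + s)^+2 / (4*c).
  apply: divr_gt0; last lra. apply: mulr_gt0; [lra | exact: exprn_gt0].
set K := (1 + etabar) * (theta - wL + s)^+2 / (4*c).
have -> : (1 + eta1) * (1 + etabar) * (theta - wL + s)^+2 / (4*c) = (1 + eta1) * K by rewrite /K; ring.
have -> : (1 + k * Q1) * (1 + etabar) * (theta - wL + s)^+2 / (4*c) = (1 + k * Q1) * K by rewrite /K; ring.
rewrite ler_pM2r // lerD2l hQ1 /eta_g.
have -> : theta + s - w = theta - w + s by ring.
have -> : k * ((1 + eta1) * (theta - w + s) / (2 * c)) = k * ((1 + eta1) * (theta - w + s)) / (2 * c) by ring.
rewrite !ler_pdivlMr; [|lra|lra].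
split => h; nra.
Qed.
End S.

Theorem mainTheorem7 (R : realFieldType) (theta c wL wH etabar k s : R) :
  0 < theta -> 0 < c -> 0 <= wL -> wL <= wH -> wH <= theta / 2 ->
  0 < etabar -> 0 <= k -> 0 <= s -> s <= wL ->
  k <= 2 * c * etabar / ((1 + etabar) * (theta - wL + s)) ->
  k <= 2 * c * (2 * theta + 2 * s - wH - wL) * (wH - wL)
         / ((theta - wH + s) ^+ 2 * (theta - wL + s)) ->
  (* (a) *)
  eta_g theta c s k wH <= eta_g theta c s k wL /\
  (forall eta1 Q1, 0 <= eta1 <= etabar ->
     is_maximizer (deployer1 theta c s wH eta1) Q1 ->
     (selects_incumbent theta c s k wL Q1 eta1 wL etabar etabar
        <-> eta1 <= eta_g theta c s k wH)) /\
  (forall eta1 Q1, 0 <= eta1 <= etabar ->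
     is_maximizer (deployer1 theta c s wL eta1) Q1 ->
     (selects_incumbent theta c s k wL Q1 eta1 wL etabar etabar
        <-> eta1 <= eta_g theta c s k wL)) /\
  (* (b) *)
  (forall w1, (w1 = wH \/ w1 = wL) ->
   forall e e', 0 <= e -> e <= e' -> e' <= etabar ->
     w1 * alpha1_of theta c s w1 e + wL * alpha2_of theta c s k wL etabar w1 e
       <= w1 * alpha1_of theta c s w1 e' + wL * alpha2_of theta c s k wL etabar w1 e' /\
     w1 * alpha1_of theta c s w1 e <= w1 * alpha1_of theta c s w1 e').
Proof.
move=> th0 c0 wL0 wLH wHt eb0 k0 s0 sL hk1 _.
have t2 : theta / 2 = theta * 2^-1 by [].
have A0 : 0 < theta - wL + s by lra.
have B0 : 0 < theta - wH + s by lra.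
have hk : k * ((1 + etabar) * (theta - wL + s)) <= 2 * c * etabar.
  by rewrite -ler_pdivlMr //; apply: mulr_gt0; lra.
have kA : k * (theta - wL + s) < 2 * c by nra.
have kB : k * (theta - wH + s) < 2 * c by nra.
have kBA : k * (theta - wH + s) <= k * (theta - wL + s) by nra.
split; [|split; [|split]].
- rewrite /eta_g.
  have -> : theta + s - wH = theta - wH + s by ring.
  have -> : theta + s - wL = theta - wL + s by ring.
  rewrite ler_pdivrMr; last lra.
  rewrite mulrAC ler_pdivlMr; last lra.
  nra.
- move=> eta1 Q1 /andP [e0 e1]; apply: part_a => //.
- move=> eta1 Q1 /andP [e0 e1]; apply: part_a => //.
- move=> w1 hw e e' e0 ee' e'b.
  have w10 : 0 <= w1 by case: hw => ->; lra.
  have X0 : 0 < theta - w1 + s by case: hw => ->.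
  have a1 : alpha1_of theta c s w1 e <= alpha1_of theta c s w1 e'.
    rewrite -subr_ge0 /alpha1_of.
    have -> : (1 + e') * (theta - w1 + s) / (2 * c) - (1 + e) * (theta - w1 + s) / (2 * c)
      = (e' - e) * (theta - w1 + s) / (2 * c) by ring.
    apply: divr_ge0; last lra. apply: mulr_ge0; lra.
  have a2 : alpha2_of theta c s k wL etabar w1 e <= alpha2_of theta c s k wL etabar w1 e'.
    rewrite -subr_ge0 /alpha2_of.
    set u := alpha1_of theta c s w1 e; set v := alpha1_of theta c s w1 e'.
    have -> : (1 + k * v) * (1 + etabar) * (theta - wL + s) / (2 * c) -
      (1 + k * u) * (1 + etabar) * (theta - wL + s) / (2 * c)
      = k * (v - u) * (1 + etabar) * (theta - wL + s) / (2 * c) by ring.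
    apply: divr_ge0; last lra. apply: mulr_ge0; last lra. apply: mulr_ge0; last lra.
    apply: mulr_ge0 => //; by rewrite subr_ge0.
  have b1 := ler_wpM2l w10 a1.
  have b2 := ler_wpM2l wL0 a2.
  split; last exact: b1.
  exact: lerD.
Qed.
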